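(* Let $n \in \mathbb{N}$ and let $J \in \mathcal{B}(\mathbb{C}^n)$ be nilpotent. If $J = MN - NM$ for some $M, N \in \mathcal{B}(\mathbb{C}^n)$ with $M^2 = 0 = N^2$, then $J^{\lfloor (n+1)/2 \rfloor} = 0$. In particular, if $n \ge 4$ and $J_n$ denotes the $n \times n$ nilpotent Jordan cell, then $J_n$ is similar to $-J_n$ but $J_n$ is not of the form $MN - NM$ with $M^2 = 0 = N^2$. *)

(* Defs.v *)
(* complex numbers are R[i] (mathcomp-real-closed 'complex')
   over an arbitrary realType R, so 'M[R[i]]_n models B(C^n). *)
From mathcomp Require Import all_boot all_algebra.
From mathcomp Require Export reals complex.
Set Implicit Arguments.
Unset Strict Implicit.
Unset Printing Implicit Defensive.
Import GRing.Theory.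
Local Open Scope ring_scope.

Definition mx_nilpotent (F : pzRingType) (n : nat) (A : 'M[F]_n) : Prop :=
  exists k : nat, A ^+ k = 0.

Definition jordan_cell (F : pzRingType) (n : nat) : 'M[F]_n :=
  \matrix_(i < n, j < n) (((i.+1 == j)%N)%:R : F).

(* Main.v *)
Require Import Defs.
From mathcomp Require Import all_boot all_algebra.
From mathcomp Require Import reals complex.
From mathcomp Require Import zify.
Import GRing.Theory Num.Theory.
Local Open Scope ring_scope.

Lemma rk_drop (F : fieldType) n (C : 'M[F]_n) j :
  (exists k, C ^+ k = 0) -> C ^+ j != 0 -> (\rank (C ^+ j.+1) < \rank (C ^+ j))%N.
Proof.
move=> [k Ck] nz; rewrite ltnNge; apply/negP => le.
have sub : (C ^+ j.+1 <= C ^+ j)%MS by rewrite exprS -mulmxE submxMl.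
have : (C ^+ j <= C ^+ j.+1)%MS.
  by rewrite -(mxrank_leqif_sup sub).2 eqn_leq le mxrankS.
case/submxP => Y HY.
have H : forall i, C ^+ j = Y ^+ i * C ^+ (j + i).
  elim=> [|i IH]; first by rewrite expr0 mul1r addn0.
  by rewrite {1}IH exprD {1}HY mulmxE -!mulrA mulrA -exprSr -exprD addSnnS.
move: nz; rewrite (H k) exprD Ck !mulr0 eqxx //.
Qed.

Lemma rk_bound0 (F : fieldType) n (C : 'M[F]_n) :
  (exists k, C ^+ k = 0) -> forall j, C ^+ j = 0 \/ (\rank (C ^+ j) + j <= n)%N.
Proof.
move=> nil; elim=> [|j IH]; first by right; rewrite expr0 (_ : 1 = 1%:M) // mxrank1 addn0.
have [->|nz] := eqVneq (C ^+ j.+1) 0; first by left.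
right; have nz' : C ^+ j != 0.
  by apply: contraNneq nz => e; rewrite exprSr e mul0r.
have := @rk_drop _ _ C _ nil nz'; case: IH => [e|IH]; first by rewrite e eqxx in nz'.
lia.
Qed.

Lemma nil_n (F : fieldType) n (C : 'M[F]_n) : (exists k, C ^+ k = 0) -> C ^+ n = 0.
Proof.
move=> nil; case: (@rk_bound0 _ _ C nil n) => // h.
by apply/eqP; rewrite -mxrank_eq0; apply/eqP; lia.
Qed.

Lemma rk_bound1 (F : fieldType) n (C : 'M[F]_n) :
  (exists k, C ^+ k = 0) -> forall j, C ^+ j.+1 = 0 \/ (\rank (C ^+ j.+1) + j <= \rank C)%N.
Proof.
move=> nil; elim=> [|j IH]; first by right; rewrite expr1 addn0.
have [->|nz] := eqVneq (C ^+ j.+2) 0; first by left.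
right; have nz' : C ^+ j.+1 != 0.
  by apply: contraNneq nz => e; rewrite exprSr e mul0r.
have := @rk_drop _ _ C _ nil nz'; case: IH => [e|IH]; first by rewrite e eqxx in nz'.
lia.
Qed.

Lemma ker_rank (F : fieldType) n (C : 'M[F]_n) :
  (exists k, C ^+ k = 0) -> C ^+ n.-1 != 0 -> (\rank (kermx C) <= 1)%N.
Proof.
move=> nil nz; rewrite mxrank_ker.
case: n C nil nz => [|[|n]] C nil nz /=; first lia.
  by have := rank_leq_row C; lia.
case: (@rk_bound1 _ _ C nil n) => [e|h]; first by rewrite e eqxx in nz.
have : (0 < \rank (C ^+ n.+1))%N by rewrite lt0n mxrank_eq0.
lia.
Qed.

Lemma mx_half (F : numFieldType) n (Y : 'M[F]_n) : Y + Y = 0 -> Y = 0.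
Proof.
move=> h; apply/matrixP => i j; move/matrixP: h => /(_ i j).
rewrite !mxE => /eqP; rewrite -mulr2n mulrn_eq0 /= => /eqP ->.
by [].
Qed.

Lemma key (F : numFieldType) n (M N : 'M[F]_n) :
  M * M = 0 -> N * N = 0 -> (exists k, (M + N) ^+ k = 0) ->
  (M + N) ^+ n.-1 * M = 0 /\ (M + N) ^+ n.-1 * N = 0.
Proof.
move=> MM NN nil.
case: n M N MM NN nil => [|n] M N MM NN nil; first by split; apply: flatmx0.
set C := M + N; set D := M - N; set X := C ^+ n.
have XC : X * C = 0 by rewrite /X -exprSr; apply: nil_n.
have DC : D * C = - (C * D).
  apply/eqP; rewrite -addr_eq0 /C /D !(mulrDr, mulrDl, mulrN, mulNr) MM NN.
  by rewrite !sub0r !subr0 add0r addrACA addNr subrr addr0.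
have DD : D * D = - (C * C).
  apply/eqP; rewrite -addr_eq0 /C /D !(mulrDr, mulrDl, mulrN, mulNr) MM NN.
  by rewrite !(sub0r, oppr0, subr0, add0r, addr0) addrACA !addNr addr0.
have XD : X * D = 0.
  apply/eqP; apply: contraT => nz.
  have nzX : X != 0 by apply: contraNneq nz => ->; rewrite mul0r.
  have kX : (X <= kermx C)%MS by apply/sub_kermxP; rewrite mulmxE.
  have kXD : (X *m D <= kermx C)%MS by apply/sub_kermxP; rewrite !mulmxE -mulrA DC mulrN mulrA XC mul0r oppr0.
  have rk := @ker_rank _ _ C nil nzX.
  have sK : (kermx C <= X *m D)%MS.
    rewrite -(mxrank_leqif_sup kXD).2 eqn_leq mxrankS //=.
    have : (0 < \rank (X *m D))%N by rewrite lt0n mxrank_eq0 mulmxE.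
    lia.
  have : (X <= X *m D)%MS by apply: submx_trans sK.
  case/submxP => Y HY; move: nz.
  by rewrite {1}HY !mulmxE -!mulrA DD mulrN mulrA XC mul0r oppr0 mulr0 eqxx.
split.
- apply: mx_half; rewrite -mulrDr.
  have -> : M + M = C + D by rewrite /C /D addrACA subrr addr0.
  by rewrite mulrDr XC XD addr0.
- apply: mx_half; rewrite -mulrDr.
  have -> : N + N = C - D by rewrite /C /D opprB [RHS]addrC addrA subrK.
  by rewrite mulrBr XC XD subr0.
Qed.

Lemma powD (R : pzRingType) (x y : R) : x * y = 0 -> y * x = 0 ->
  forall i, (x + y) ^+ i.+1 = x ^+ i.+1 + y ^+ i.+1.
Proof.
move=> xy yx; elim=> [|i IH]; first by rewrite !expr1.
rewrite exprS IH mulrDl !mulrDr -!exprS (exprS y i) mulrA xy mul0r.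
by rewrite (exprS x i) mulrA yx mul0r addr0 add0r.
Qed.

Lemma lift_pow (R : pzRingType) (x y : R) : y * x = 0 ->
  forall i, (x - y) ^+ i * x = x ^+ i.+1.
Proof.
move=> yx; elim=> [|i IH]; first by rewrite expr0 mul1r expr1.
by rewrite exprSr -mulrA mulrBl yx subr0 mulrA IH -exprSr.
Qed.

Lemma sq_sum (R : pzRingType) (M N : R) : M * M = 0 -> N * N = 0 ->
  (M + N) ^+ 2 = M * N + N * M.
Proof. by move=> MM NN; rewrite expr2 mulrDl !mulrDr MM NN add0r addr0. Qed.

Lemma wordN (R : pzRingType) (M N : R) : M * M = 0 -> N * N = 0 ->
  forall i, (M * N) ^+ i.+1 = (M + N) ^+ (i.*2.+1) * N.
Proof.
move=> MM NN; elim=> [|i IH].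
  by rewrite !expr1 mulrDl NN addr0.
have -> : ((i.+1).*2.+1 = 2 + i.*2.+1)%N by rewrite doubleS add2n.
rewrite exprD -mulrA -IH sq_sum // mulrDl -exprS.
have BA : N * M * (M * N) = 0 by rewrite mulrA -(mulrA N) MM mulr0 mul0r.
by rewrite [in RHS](exprS (M * N) i) mulrA BA mul0r addr0.
Qed.

Lemma part1 (F : numFieldType) n (J M N : 'M[F]_n) :
  (exists k, J ^+ k = 0) -> M * M = 0 -> N * N = 0 -> J = M * N - N * M ->
  J ^+ ((n + 1) %/ 2)%N = 0.
Proof.
move=> [k Jk] MM NN eJ; subst J.
have AB : (M * N) * (N * M) = 0 by rewrite mulrA -(mulrA M) NN mulr0 mul0r.
have BA : (N * M) * (M * N) = 0 by rewrite mulrA -(mulrA N) MM mulr0 mul0r.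
have Ak : (M * N) ^+ k.+1 = 0 by rewrite -(lift_pow _ _ _ BA) Jk mul0r.
have Bk : (N * M) ^+ k.+1 = 0.
  by rewrite -(lift_pow _ _ _ AB) -opprB exprNn Jk mulr0 mul0r.
have nilC : exists k, (M + N) ^+ k = 0.
  by exists (k.+1).*2; rewrite -mul2n exprM sq_sum // powD // Ak Bk addr0.
have [XM XN] := key _ _ _ _ MM NN nilC.
have Am : forall m, (n.-1 <= m.*2.+1)%N -> (M * N) ^+ m.+1 = 0.
  move=> m hm; rewrite wordN // -(subnK hm) exprD -mulrA XN mulr0 //.
have Bm : forall m, (n.-1 <= m.*2.+1)%N -> (N * M) ^+ m.+1 = 0.
  move=> m hm; rewrite wordN // addrC -(subnK hm) exprD -mulrA XM mulr0 //.
case E : ((n + 1) %/ 2)%N => [|m].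
  apply/matrixP => i; case: i => i hi; exfalso; lia.
have hm : (n.-1 <= m.*2.+1)%N.
  have := divn_eq (n+1) 2; have := ltn_pmod (n+1) (isT : (0 < 2)%N); rewrite E.
  by move: ((n+1) %% 2)%N => r; clear; rewrite -muln2 -subn1; lia.
have e1 : (M * N) * - (N * M) = 0 by rewrite mulrN AB oppr0.
have e2 : - (N * M) * (M * N) = 0 by rewrite mulNr BA oppr0.
by rewrite (powD _ _ _ e1 e2) exprNn Am // Bm // mulr0 addr0.
Qed.

Lemma jpow (F : pzRingType) n k (i j : 'I_n) :
  (jordan_cell F n ^+ k) i j = ((i + k)%N == j)%:R.
Proof.
elim: k i j => [|k IH] i j.
  by rewrite expr0 addn0 (_ : 1 = 1%:M) // mxE.
rewrite exprSr -mulmxE mxE.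
under eq_bigr => l _ do rewrite IH mxE.
case h : (i + k < n)%N.
  rewrite (bigD1 (Ordinal h)) //= eqxx mul1r big1 ?addr0 ?addnS //.
  move=> l hl; rewrite (_ : (i + k == l)%N = false) ?mul0r //.
  by apply/negbTE; apply: contra hl => /eqP e; apply/eqP/val_inj.
rewrite big1; last first.
  move=> l _; rewrite (_ : (i + k == l)%N = false) ?mul0r //.
  by apply/negbTE/eqP => e; move: h (ltn_ord l); rewrite -e => ->.
rewrite (_ : (i + k.+1 == j)%N = false) //.
by apply/negbTE/eqP => e; move: h (ltn_ord j); rewrite -e; lia.
Qed.

Lemma jsim (F : fieldType) n :
  similar_in unitmx (jordan_cell F n) (- jordan_cell F n).
Proof.
set P := diag_mx (\row_(i < n) ((-1 : F) ^+ i)).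
have PP : P *m P = 1%:M.
  apply/matrixP => i j; rewrite mul_diag_mx !mxE.
  case: (eqVneq i j) => [->|ne]; last by rewrite mulr0.
  by rewrite mulr1n -exprD -signr_odd oddD addbb.
have [uP _] := mulmx1_unit PP.
have iP : invmx P = P by rewrite -[RHS](mulKmx uP P) PP mulmx1.
exists P => //; rewrite /similar_to /= conjumx // iP; apply/eqP/matrixP => i j.
rewrite mul_mx_diag mul_diag_mx !mxE.
case h : (i.+1 == j)%N; last by rewrite mulr0 mul0r oppr0.
by rewrite mulr1 -(eqP h) -exprD -signr_odd addnS oddS oddD addbb.
Qed.

Local Open Scope complex_scope.

Theorem corollary3p04 (R : realType) :
  (forall (n : nat) (J M N : 'M[R[i]]_n),
      mx_nilpotent J -> M *m M = 0 -> N *m N = 0 ->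
      J = M *m N - N *m M ->
      J ^+ ((n + 1) %/ 2)%N = 0)
  /\
  (forall n : nat, (4 <= n)%N ->
      similar_in unitmx (jordan_cell R[i] n) (- jordan_cell R[i] n)
      /\ ~ (exists M N : 'M[R[i]]_n,
              M *m M = 0 /\ N *m N = 0 /\
              jordan_cell R[i] n = M *m N - N *m M)).
Proof.
split.
  move=> n J M N nJ MM NN eJ; rewrite !mulmxE in MM NN eJ.
  exact: (part1 _ _ _ _ _ nJ MM NN eJ).
move=> n n4; split; first exact: jsim.
case=> M [N [MM [NN eJ]]]; rewrite !mulmxE in MM NN eJ.
have nJ : exists k, jordan_cell R[i] n ^+ k = 0.
  exists n; apply/matrixP => i j; rewrite jpow mxE.
  rewrite (_ : (i + n == j)%N = false) //.
  by apply/negbTE/eqP => e; move: (ltn_ord j); rewrite -e; lia.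
have h0 : (0 < n)%N by lia.
have h1 : ((n + 1) %/ 2 < n)%N.
  have := divn_eq (n+1) 2; have := ltn_pmod (n+1) (isT : (0 < 2)%N).
  by move: ((n+1) %/ 2)%N ((n+1) %% 2)%N => q r; lia.
have := part1 _ _ _ _ _ nJ MM NN eJ.
move/matrixP => /(_ (Ordinal h0) (Ordinal h1)).
by rewrite jpow mxE /= add0n eqxx => /eqP; rewrite oner_eq0.
Qed.
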